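(* Let $H$ be the graph consisting of two vertex-disjoint triangles $v_1v_2v_3$ and $w_1w_2w_3$ together with the edge $v_3w_1$. Let $n\ge 7$ and let $G$ be a graph with $n$ vertices obtained from $H$ by attaching $n-6$ pendant edges (new leaves) to vertices of $H$, such that $v_3$ is incident with at least one pendant edge, $w_1$ is incident with no pendant edge, and at least one vertex of $\{v_1,v_2,w_2,w_3\}$ is incident with a pendant edge. Then $\operatorname{avm}(G)>\operatorname{avm}(T_n^1(3,3))$.
   Context: $\operatorname{avm}(G)$ is the average of $|M|$ over all maximal matchings $M$ of $G$ (a matching is maximal if not properly contained in another matching). $T_n^1(3,3)$ is the graph obtained from $H$ by attaching $n-6$ pendant edges (new leaves) to $v_3$. *)

(* Defs.v *)
From mathcomp Require Import all_boot all_order all_algebra.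
Set Implicit Arguments. Unset Strict Implicit. Unset Printing Implicit Defensive.
Import GRing.Theory Num.Theory.

Section Matchings.
Variable V : finType.
Variable adj : rel V.

Definition is_edge (s : {set V}) : bool :=
  [exists x, exists y, [&& x != y, adj x y & s == [set x; y]]].

Definition matching (M : {set {set V}}) : bool :=
  [forall s in M, is_edge s] &&
  [forall s in M, forall t in M, (s != t) ==> [disjoint s & t]].

Definition maximal_matching (M : {set {set V}}) : bool :=
  matching M && [forall M' : {set {set V}}, (M \proper M') ==> ~~ matching M'].

(* average size of a maximal matching (there is always at least one) *)
Definition avm : rat :=
  ((\sum_(M : {set {set V}} | maximal_matching M) #|M|)%:R /
   (#|[set M : {set {set V}} | maximal_matching M]|)%:R)%R.
End Matchings.

Definition v1 : 'I_6 := @Ordinal 6 0 isT.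
Definition v2 : 'I_6 := @Ordinal 6 1 isT.
Definition v3 : 'I_6 := @Ordinal 6 2 isT.
Definition w1 : 'I_6 := @Ordinal 6 3 isT.
Definition w2 : 'I_6 := @Ordinal 6 4 isT.
Definition w3 : 'I_6 := @Ordinal 6 5 isT.

Definition H_edges : seq (nat * nat) :=
  [:: (0,1); (1,2); (0,2); (3,4); (4,5); (3,5); (2,3)]%N.

Definition H_adj (a b : 'I_6) : bool :=
  ((val a, val b) \in H_edges) || ((val b, val a) \in H_edges).

Definition pend_adj (k : nat) (f : 'I_k -> 'I_6) (x y : 'I_6 + 'I_k) : bool :=
  match x, y with
  | inl a, inl b => H_adj a b
  | inl a, inr i => f i == a
  | inr i, inl a => f i == a
  | inr _, inr _ => false
  end.

Arguments pend_adj {k} f x y.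
Definition T1_33 (n : nat) : rel ('I_6 + 'I_(n - 6)) :=
  pend_adj (fun _ : 'I_(n - 6) => v3).
Arguments T1_33 n x y : clear implicits.

(* Main.v *)
Require Import Defs.
From mathcomp Require Import all_boot all_order all_algebra.
From mathcomp Require Import ring.
Import GRing.Theory Num.Theory.
Set Implicit Arguments. Unset Strict Implicit. Unset Printing Implicit Defensive.

Definition B7 := (bool * bool * bool * bool * bool * bool * bool)%type.
Definition eb (e : B7) (j : nat) : bool :=
  let: (b0, b1, b2, b3, b4, b5, b6) := e in nth false [:: b0; b1; b2; b3; b4; b5; b6] j.
Definition hun (j : nat) : nat := nth 0 [:: 0; 1; 0; 3; 4; 3; 2] j.
Definition hvn (j : nat) : nat := nth 0 [:: 1; 2; 2; 4; 5; 5; 3] j.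
Definition covn (e : B7) (v : nat) : bool :=
  has (fun j => eb e j && ((hun j == v) || (hvn j == v))) (iota 0 7).
Definition Hmatchn (e : B7) : bool :=
  all (fun j => all (fun j' => (j == j') || ~~ (eb e j && eb e j') ||
     [&& hun j != hun j', hun j != hvn j', hvn j != hun j' & hvn j != hvn j'])
   (iota 0 7)) (iota 0 7).
Definition maxc (zs : seq bool) (e : B7) : bool :=
  all (fun j => ~~ [&& ~~ covn e (hun j), ~~ covn e (hvn j),
                    nth false zs (hun j) & nth false zs (hvn j)]) (iota 0 7).
Definition Hvalid zs e := Hmatchn e && maxc zs e.

Lemma hun_lt j : hun j < 6. Proof. rewrite /hun; do 7 (case: j => [|j]; first by []). by case: j. Qed.
Lemma hvn_lt j : hvn j < 6. Proof. rewrite /hvn; do 7 (case: j => [|j]; first by []). by case: j. Qed.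
Definition hu (j : 'I_7) : 'I_6 := Ordinal (hun_lt j).
Definition hv (j : 'I_7) : 'I_6 := Ordinal (hvn_lt j).

Lemma covP e (v : 'I_6) :
  reflect (exists j : 'I_7, eb e j && ((hu j == v) || (hv j == v))) (covn e v).
Proof.
apply: (iffP hasP) => [[j]|[j Hj]].
  rewrite mem_iota => /andP[_]; rewrite add0n => Hj Hb; by exists (Ordinal Hj).
by exists (val j); rewrite // mem_iota /= add0n ltn_ord.
Qed.

Lemma HmatchP e : reflect (forall j j' : 'I_7, j != j' -> eb e j -> eb e j' ->
   [&& hu j != hu j', hu j != hv j', hv j != hu j' & hv j != hv j']) (Hmatchn e).
Proof.
apply: (iffP allP) => [H j j' Hne Hj Hj'|H j].
  have Hm (x : 'I_7) : val x \in iota 0 7 by rewrite mem_iota /= add0n ltn_ord.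
  have /allP/(_ _ (Hm j')) := H _ (Hm j).
  have Hne' : (val j == val j') = false by apply: negbTE.
  by rewrite Hj Hj' Hne'.
rewrite mem_iota => /andP[_]; rewrite add0n => Hj.
apply/allP => j'; rewrite mem_iota => /andP[_]; rewrite add0n => Hj'.
case: (eqVneq j j') => [->|Hne]; first by rewrite eqxx.
have Hne' : Ordinal Hj != Ordinal Hj' by exact: Hne.
case Hb: (eb e j); case Hb': (eb e j') => //=.
exact: (H _ _ Hne' Hb Hb').
Qed.

Lemma maxcP zs e : reflect (forall j : 'I_7, ~~ [&& ~~ covn e (hu j), ~~ covn e (hv j),
                    nth false zs (hu j) & nth false zs (hv j)]) (maxc zs e).
Proof.
apply: (iffP allP) => [H j|H j]; first by apply: H; rewrite mem_iota /= add0n ltn_ord.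
by rewrite mem_iota => /andP[_]; rewrite add0n => Hj; apply: (H (Ordinal Hj)).
Qed.

Lemma hedge_ok (j : 'I_7) : (hu j != hv j) && H_adj (hu j) (hv j).
Proof. by case: j => [[|[|[|[|[|[|[|j]]]]]]] Hj]. Qed.

Lemma H_adj_edge (a b : 'I_6) : H_adj a b ->
  exists j : 'I_7, (hu j == a) && (hv j == b) || (hu j == b) && (hv j == a).
Proof.
case: a => [[|[|[|[|[|[|a]]]]]] Ha] //; case: b => [[|[|[|[|[|[|b]]]]]] Hb] // _;
 by [ exists (@Ordinal 7 0 isT) | exists (@Ordinal 7 1 isT) | exists (@Ordinal 7 2 isT)
   | exists (@Ordinal 7 3 isT) | exists (@Ordinal 7 4 isT) | exists (@Ordinal 7 5 isT)
   | exists (@Ordinal 7 6 isT) ].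
Qed.

Lemma hend_inj (j j' : 'I_7) :
  (hu j == hu j') && (hv j == hv j') || (hu j == hv j') && (hv j == hu j') -> j = j'.
Proof.
move=> H; apply: val_inj; move: H.
by case: j => [[|[|[|[|[|[|[|j]]]]]]] Hj]; case: j' => [[|[|[|[|[|[|[|j']]]]]]] Hj'].
Qed.

Definition fac (cs : seq nat) (e : B7) (v : nat) : nat :=
  if covn e v then 1 else nth 1 cs v.
Definition mono (cs : seq nat) (e : B7) : nat :=
  fac cs e 0 * fac cs e 1 * fac cs e 2 * fac cs e 3 * fac cs e 4 * fac cs e 5.
Definition nbits (e : B7) : nat := count (eb e) (iota 0 7).
Definition wt (zs : seq bool) (e : B7) : nat :=
  nbits e + count (fun v => ~~ covn e v && ~~ nth false zs v) (iota 0 6).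
Definition zeros (xs : seq nat) := [seq x == 0 | x <- xs].
Definition cval (x : nat) := if x is 0 then 1 else x.
Definition cvals (xs : seq nat) := [seq cval x | x <- xs].
Definition TOT (xs : seq nat) : nat :=
  \sum_(e : B7 | Hvalid (zeros xs) e) mono (cvals xs) e * wt (zeros xs) e.
Definition CNT (xs : seq nat) : nat :=
  \sum_(e : B7 | Hvalid (zeros xs) e) mono (cvals xs) e.

Lemma sum_pair (A B : finType) (F : A * B -> nat) :
  \sum_(p : A * B) F p = \sum_(a : A) \sum_(b : B) F (a, b).
Proof. by rewrite pair_bigA; apply: eq_bigr => -[]. Qed.

Definition tf := [:: true; false].
Definition allB7 : seq B7 :=
  [seq (p, b) | p <- [seq (p, b) | p <- [seq (p, b) | p <- [seq (p, b) | p <-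
   [seq (p, b) | p <- [seq (p, b) | p <- tf, b <- tf], b <- tf], b <- tf], b <- tf], b <- tf], b <- tf].

Lemma sum_bool_tf (F : bool -> nat) : \sum_(b : bool) F b = \sum_(b <- tf) F b.
Proof. by rewrite big_bool /tf !big_cons big_nil addn0. Qed.

Lemma sumB7 (F : B7 -> nat) : \sum_(e : B7) F e = \sum_(e <- allB7) F e.
Proof.
rewrite !sum_pair /allB7 !big_allpairs sum_bool_tf; apply: eq_bigr => b0 _.
rewrite sum_bool_tf; apply: eq_bigr => b1 _.
rewrite sum_bool_tf; apply: eq_bigr => b2 _.
rewrite sum_bool_tf; apply: eq_bigr => b3 _.
rewrite sum_bool_tf; apply: eq_bigr => b4 _.
rewrite sum_bool_tf; apply: eq_bigr => b5 _.
by rewrite sum_bool_tf.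
Qed.

Definition Lz zs := [seq e <- allB7 | Hvalid zs e].

Lemma TOT_L xs : TOT xs = \sum_(e <- Lz (zeros xs)) mono (cvals xs) e * wt (zeros xs) e.
Proof. by rewrite /TOT /Lz big_filter big_mkcond [RHS]big_mkcond sumB7. Qed.
Lemma CNT_L xs : CNT xs = \sum_(e <- Lz (zeros xs)) mono (cvals xs) e.
Proof. by rewrite /CNT /Lz big_filter big_mkcond [RHS]big_mkcond sumB7. Qed.

Ltac reflL :=
  match goal with |- context [Lz ?zs] =>
    let l := eval vm_compute in (Lz zs) in
    rewrite (_ : Lz zs = l); [| by vm_compute] end.

Ltac evalTC := rewrite ?TOT_L ?CNT_L; reflL;
  rewrite !big_cons !big_nil /mono /fac /wt /nbits /cvals /zeros /=.

Lemma T_TOT m : TOT [:: 0; 0; m.+1; 0; 0; 0] = 9 * m.+1 + 15.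
Proof. evalTC. ring. Qed.
Lemma T_CNT m : CNT [:: 0; 0; m.+1; 0; 0; 0] = 3 * m.+1 + 7.
Proof. evalTC. ring. Qed.

Lemma lt_addS a d : a < a + d.+1.
Proof. by rewrite addnS ltnS leq_addr. Qed.
Lemma lt_by_eq a b d : b = a + d.+1 -> a < b.
Proof. by move=> ->; apply: lt_addS. Qed.

Section Graph.
Variable k : nat.
Variable f : 'I_k -> 'I_6.
Local Notation V := ('I_6 + 'I_k)%type.
Local Notation adj := (pend_adj f).

Definition hedge (j : 'I_7) : {set V} := [set inl (hu j); inl (hv j)].
Definition leafe (v : 'I_6) (i : 'I_k) : {set V} := [set inl v; inr i].
Definition alpha (v : 'I_6) : nat := #|[set i | f i == v]|.

Lemma disjP (T : finType) (A B : {set T}) : reflect (forall x, x \in A -> x \notin B) [disjoint A & B].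
Proof.
rewrite disjoint_subset; apply: (iffP subsetP) => H x /H; by rewrite ?inE.
Qed.

Lemma in_hedge x j : (x \in hedge j) = (x == inl (hu j)) || (x == inl (hv j)).
Proof. by rewrite !inE. Qed.
Lemma in_leafe x v i : (x \in leafe v i) = (x == inl v) || (x == inr i).
Proof. by rewrite !inE. Qed.

Lemma inl_hedge (y : 'I_6) j : (inl y \in hedge j) = (y == hu j) || (y == hv j).
Proof. by rewrite in_hedge !(inj_eq (@inl_inj _ _)). Qed.
Lemma inr_hedge i j : (inr i \in hedge j) = false.
Proof. by rewrite in_hedge. Qed.
Lemma inl_leafe y v i : (inl y \in leafe v i) = (y == v).
Proof. by rewrite in_leafe (inj_eq (@inl_inj _ _)) orbF. Qed.
Lemma inr_leafe i' v i : (inr i' \in leafe v i) = (i' == i).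
Proof. by rewrite in_leafe (inj_eq (@inr_inj _ _)). Qed.

Lemma hedge_leafe j v i : hedge j != leafe v i.
Proof.
apply/eqP => /setP /(_ (inr i)); by rewrite inr_hedge inr_leafe eqxx.
Qed.

Lemma hedge_inj : injective hedge.
Proof.
move=> j j' /setP E; apply: hend_inj.
have := E (inl (hu j)); have := E (inl (hv j)); rewrite !inl_hedge !eqxx orbT /= => /esym H2 /esym H1.
case/andP: (hedge_ok j) => Hne _.
case/orP: H1 => /eqP a; case/orP: H2 => /eqP b; by move: Hne; rewrite a b !eqxx //= ?orbT.
Qed.


Lemma leafe_inj v i v' i' : leafe v i = leafe v' i' -> v = v' /\ i = i'.
Proof.
move/setP=> E; have := E (inl v); have := E (inr i).
by rewrite !inl_leafe !inr_leafe !eqxx => /esym/eqP -> /esym/eqP ->.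
Qed.

Lemma edge_cases s : is_edge adj s ->
  (exists j, s = hedge j) \/ (exists i, s = leafe (f i) i).
Proof.
case/existsP => x /existsP [y /and3P [Hxy Hadj /eqP ->]].
case: x y Hadj Hxy => [a|i] [b|i'] //= Hadj _.
- have [j /orP[/andP[/eqP <- /eqP <-]|/andP[/eqP <- /eqP <-]]] := H_adj_edge Hadj.
    by left; exists j.
  by left; exists j; rewrite /hedge setUC.
- by right; exists i'; rewrite /leafe (eqP Hadj).
- by right; exists i; rewrite /leafe (eqP Hadj) setUC.
Qed.

Lemma hedge_edge j : is_edge adj (hedge j).
Proof.
apply/existsP; exists (inl (hu j)); apply/existsP; exists (inl (hv j)).
case/andP: (hedge_ok j) => H1 H2.
by apply/and3P; split; [rewrite (inj_eq (@inl_inj _ _)) | exact: H2 | ].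
Qed.

Lemma leafe_edge i : is_edge adj (leafe (f i) i).
Proof.
apply/existsP; exists (inl (f i)); apply/existsP; exists (inr i).
by apply/and3P; split; [ | exact: eqxx | ].
Qed.

Definition asf : seq nat := [:: alpha (@Ordinal 6 0 isT); alpha (@Ordinal 6 1 isT);
  alpha (@Ordinal 6 2 isT); alpha (@Ordinal 6 3 isT); alpha (@Ordinal 6 4 isT);
  alpha (@Ordinal 6 5 isT)].
Definition zsf := zeros asf.
Definition csf := cvals asf.

Lemma nth_asf (v : 'I_6) : nth 0 asf v = alpha v.
Proof. by case: v => [[|[|[|[|[|[|m]]]]]] Hm] //=; congr alpha; apply: val_inj. Qed.
Lemma nth_zs (v : 'I_6) : nth false zsf v = (alpha v == 0).
Proof. by rewrite /zsf /zeros (nth_map 0) ?nth_asf. Qed.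
Lemma nth_cs (v : 'I_6) : nth 1 csf v = cval (alpha v).
Proof. by rewrite /csf /cvals (nth_map 0) ?nth_asf. Qed.

Definition code := (B7 * {ffun 'I_6 -> option 'I_k})%type.
Definition opt (e : B7) (v : 'I_6) : {set option 'I_k} :=
  if covn e v || (alpha v == 0) then [set None] else Some @: [set i | f i == v].
Definition validc (c : code) : bool :=
  Hvalid zsf c.1 && [forall v, c.2 v \in opt c.1 v].
Definition ebs (e : B7) := [set j : 'I_7 | eb e j].
Definition lps (g : {ffun 'I_6 -> option 'I_k}) := [set p : 'I_6 * 'I_k | g p.1 == Some p.2].
Definition decode (c : code) : {set {set V}} :=
  (hedge @: ebs c.1) :|: [set leafe p.1 p.2 | p in lps c.2].

Lemma in_decode (s : {set V}) (c : code) : reflect ((exists2 j : 'I_7, eb c.1 j & s = hedge j) \/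
   (exists v i, c.2 v = Some i /\ s = leafe v i)) (s \in decode c).
Proof.
rewrite inE; apply: (iffP orP) => [[/imsetP[j] | /imsetP[p]] | [[j Hj ->]|[v [i [H ->]]]]].
- by rewrite inE => Hj ->; left; exists j.
- by rewrite inE => /eqP H ->; right; exists p.1, p.2.
- by left; apply/imsetP; exists j; rewrite ?inE.
- by right; apply/imsetP; exists (v, i); rewrite // inE H.
Qed.

Lemma hedge_in_decode (c : code) j : (hedge j \in decode c) = eb c.1 j.
Proof.
apply/idP/idP => [/in_decode [[j' Hj /hedge_inj ->]//|[v [i [_ E]]]]|Hj].
  by move: (hedge_leafe j v i); rewrite E eqxx.
by apply/in_decode; left; exists j.
Qed.

Lemma leafe_in_decode (c : code) v i : (leafe v i \in decode c) = (c.2 v == Some i).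
Proof.
apply/idP/idP => [/in_decode [[j' Hj E]|[v' [i' [H /leafe_inj [-> ->]]]]]|/eqP H].
- by move: (hedge_leafe j' v i); rewrite E eqxx.
- by rewrite H.
by apply/in_decode; right; exists v, i.
Qed.

Lemma eb_ext (e e' : B7) : (forall j : 'I_7, eb e j = eb e' j) -> e = e'.
Proof.
case: e => [[[[[[b0 b1] b2] b3] b4] b5] b6]; case: e' => [[[[[[c0 c1] c2] c3] c4] c5] c6] H.
move: (H (@Ordinal 7 0 isT)) (H (@Ordinal 7 1 isT)) (H (@Ordinal 7 2 isT))
  (H (@Ordinal 7 3 isT)) (H (@Ordinal 7 4 isT)) (H (@Ordinal 7 5 isT)) (H (@Ordinal 7 6 isT)).
by rewrite /eb /= => -> -> -> -> -> -> ->.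
Qed.

Lemma decode_inj : injective decode.
Proof.
move=> [e g] [e' g'] H.
have He : e = e'.
  by apply: eb_ext => j; rewrite -(hedge_in_decode (e, g)) H hedge_in_decode.
have Hl v i : (g v == Some i) = (g' v == Some i).
  by rewrite -(leafe_in_decode (e, g)) H leafe_in_decode.
suff -> : g = g' by rewrite He.
apply/ffunP => v; case Hv: (g v) => [i|]; case Hv': (g' v) => [i'|] //.
- by have := Hl v i; rewrite Hv Hv' eqxx => /esym/eqP [->].
- by have := Hl v i; rewrite Hv Hv' eqxx.
- by have := Hl v i'; rewrite Hv Hv' eqxx.
Qed.


Lemma alpha_f i : alpha (f i) != 0.
Proof. by rewrite /alpha -lt0n card_gt0; apply/set0Pn; exists i; rewrite inE. Qed.

Lemma opt_some e (v : 'I_6) i : Some i \in opt e v -> (f i = v) /\ ~~ covn e v.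
Proof.
rewrite /opt; case: ifP => [_|/norP [Hc _]]; first by rewrite inE.
by case/imsetP => i' ; rewrite inE => /eqP Hf [->]; split.
Qed.

Lemma opt_none e (v : 'I_6) : None \in opt e v -> covn e v || (alpha v == 0).
Proof. by rewrite /opt; case: ifP => // _ /imsetP [?]. Qed.

Section Valid.
Variable c : code.
Hypothesis Hc : validc c.
Let e := c.1.
Let g := c.2.
Let Hv : Hvalid zsf e. Proof. by case/andP: Hc. Qed.
Let Hg v : g v \in opt e v. Proof. by case/andP: Hc => _ /forallP. Qed.

Lemma vmeet (v : 'I_6) : covn e v || (alpha v != 0) -> exists2 t, t \in decode c & inl v \in t.
Proof.
case Hcv: (covn e v) => /=; [move=> _ | move=> Ha].
  case/covP: Hcv => j /andP [Hj Hjv]; exists (hedge j).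
    by rewrite hedge_in_decode.
  by rewrite inl_hedge !(eq_sym v).
have := Hg v; rewrite /opt Hcv (negbTE Ha) /= => /imsetP [i _ Hi].
exists (leafe v i); last by rewrite inl_leafe.
by rewrite leafe_in_decode -/g Hi.
Qed.

Lemma meet (s : {set V}) : is_edge adj s -> exists2 t, t \in decode c & exists2 x, x \in s & x \in t.
Proof.
case/edge_cases => [[j ->]|[i ->]].
  have Hx1 : inl (hu j) \in hedge j by rewrite inl_hedge eqxx.
  have Hx2 : inl (hv j) \in hedge j by rewrite inl_hedge eqxx orbT.
  case H1: (covn e (hu j)).
    by have [t Ht Hx] := @vmeet (hu j) (introT orP (or_introl H1)); exists t => //; exists (inl (hu j)).
  case H2: (covn e (hv j)).
    by have [t Ht Hx] := @vmeet (hv j) (introT orP (or_introl H2)); exists t => //; exists (inl (hv j)).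
  have := (elimT (maxcP _ _) (proj2 (andP Hv))) j; rewrite H1 H2 !nth_zs /= => /nandP [Z|Z].
    by have [t Ht Hx] := @vmeet (hu j) (introT orP (or_intror Z)); exists t => //; exists (inl (hu j)).
  by have [t Ht Hx] := @vmeet (hv j) (introT orP (or_intror Z)); exists t => //; exists (inl (hv j)).
have [t Ht Hx] := @vmeet (f i) (introT orP (or_intror (alpha_f i))).
by exists t => //; exists (inl (f i)); rewrite // inl_leafe.
Qed.

Lemma decode_edges s : s \in decode c -> is_edge adj s.
Proof.
case/in_decode => [[j _ ->]|[v [i [Hi ->]]]]; first exact: hedge_edge.
have := Hg v; rewrite -/g Hi => /opt_some [<- _]; exact: leafe_edge.
Qed.

Lemma decode_disj s t : s \in decode c -> t \in decode c -> s != t -> [disjoint s & t].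
Proof.
have Hm := elimT (HmatchP _) (proj1 (andP Hv)).
have hl (j : 'I_7) (v : 'I_6) i : eb e j -> g v = Some i -> [disjoint hedge j & leafe v i].
  move=> Hj Hi; have := Hg v; rewrite Hi => /opt_some [_ Hcv].
  apply/disjP => x; rewrite in_hedge => /orP [] /eqP ->; rewrite inl_leafe;
  apply: contra Hcv => /eqP <-; apply/covP; exists j; by rewrite Hj eqxx ?orbT.
case/in_decode => [[j Hj ->]|[v [i [Hi ->]]]]; case/in_decode => [[j' Hj' ->]|[v' [i' [Hi' ->]]]] Hne.
- have Hjj : j != j' by apply: contraNneq Hne => ->.
  case/and4P: (Hm _ _ Hjj Hj Hj') => a1 a2 a3 a4.
  apply/disjP => x; rewrite in_hedge => /orP [] /eqP ->; rewrite inl_hedge negb_or ?a1 ?a2 //=.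
  by rewrite a3 a4.
- exact: hl.
- by rewrite disjoint_sym; apply: hl.
- apply/disjP => x; rewrite in_leafe => /orP [] /eqP ->.
    rewrite inl_leafe; apply: contra Hne => /eqP Evv; move: Hi'; rewrite -Evv -/g Hi => -[->].
    by rewrite Evv.
  rewrite inr_leafe; apply: contra Hne => /eqP Eii.
  have := Hg v; have := Hg v'; rewrite -/g Hi Hi' => /opt_some [Hf' _] /opt_some [Hf _].
  by rewrite -Hf -Hf' Eii.
Qed.

Lemma decode_match : matching adj (decode c).
Proof.
apply/andP; split; apply/forallP => s; apply/implyP => Hs.
  exact: decode_edges.
apply/forallP => t; apply/implyP => Ht; apply/implyP; exact: decode_disj.
Qed.

Lemma decode_max : maximal_matching adj (decode c).
Proof.
rewrite /maximal_matching decode_match /=; apply/forallP => M'; apply/implyP.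
case/properP => Hsub [s HsM' HsN]; apply/negP => /andP [/forallP He /forallP Hd].
have Hse := implyP (He s) HsM'.
have [t Ht [x Hxs Hxt]] := meet Hse.
have HtM' := subsetP Hsub _ Ht.
have Hst : s != t by apply: contraNneq HsN => ->.
have := implyP (forallP (implyP (Hd s) HsM') t) HtM'.
by move=> /implyP /(_ Hst) /disjP /(_ x Hxs); rewrite Hxt.
Qed.

End Valid.

Section Surj.
Variable M : {set {set V}}.
Hypothesis HM : maximal_matching adj M.

Let Hmatch : matching adj M. Proof. by case/andP: HM. Qed.
Let Hedge s : s \in M -> is_edge adj s.
Proof. by case/andP: Hmatch => /forallP H _; move: (H s) => /implyP. Qed.
Let Hdisj s t : s \in M -> t \in M -> s != t -> [disjoint s & t].
Proof.
case/andP: Hmatch => _ /forallP H Hs Ht.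
by move: (H s) => /implyP /(_ Hs) /forallP /(_ t) /implyP /(_ Ht) /implyP.
Qed.
Lemma same_vertex s t x : s \in M -> t \in M -> x \in s -> x \in t -> s = t.
Proof.
move=> Hs Ht Hxs Hxt; apply/eqP/negPn/negP => Hne.
by move/disjP: (Hdisj Hs Ht Hne) => /(_ x Hxs); rewrite Hxt.
Qed.

Lemma not_max s : is_edge adj s -> s \notin M -> (forall t, t \in M -> [disjoint s & t]) -> False.
Proof.
move=> Hse HsM Hd; case/andP: HM => _ /forallP /(_ (s |: M)) /implyP H.
have Hp : M \proper s |: M.
  apply/properP; split; first exact: subsetUr.
  by exists s; rewrite ?setU11.
move/negP: (H Hp); apply; apply/andP; split; apply/forallP => u; apply/implyP.
  by case/setU1P => [->|/Hedge].
case/setU1P => [->|Hu]; apply/forallP => w; apply/implyP; case/setU1P => [->|Hw];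
  apply/implyP => Hne.
- by rewrite eqxx in Hne.
- exact: Hd.
- by rewrite disjoint_sym; apply: Hd.
- exact: Hdisj.
Qed.

Definition mkE : B7 :=
  (hedge (@Ordinal 7 0 isT) \in M, hedge (@Ordinal 7 1 isT) \in M,
   hedge (@Ordinal 7 2 isT) \in M, hedge (@Ordinal 7 3 isT) \in M,
   hedge (@Ordinal 7 4 isT) \in M, hedge (@Ordinal 7 5 isT) \in M,
   hedge (@Ordinal 7 6 isT) \in M).
Definition mkG : {ffun 'I_6 -> option 'I_k} := [ffun v => [pick i | leafe v i \in M]].

Lemma eb_mkE (j : 'I_7) : eb mkE j = (hedge j \in M).
Proof.
by case: j => [[|[|[|[|[|[|[|m]]]]]]] Hm] //=; congr (hedge _ \in M); apply: val_inj.
Qed.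

Lemma mkG_some v i : mkG v = Some i -> leafe v i \in M.
Proof. by rewrite ffunE; case: pickP => // i' Hi' [<-]. Qed.
Lemma mkG_none v i : mkG v = None -> leafe v i \notin M.
Proof. by rewrite ffunE; case: pickP => // H _; rewrite H. Qed.

Lemma mkG_f v i : mkG v = Some i -> f i = v.
Proof.
move/mkG_some/Hedge/edge_cases => [[j E]|[i' /leafe_inj [-> ->]]] //.
by move: (hedge_leafe j v i); rewrite E eqxx.
Qed.

Lemma inM_cases t (y : 'I_6) : t \in M -> inl y \in t -> covn mkE y || (mkG y != None).
Proof.
move=> Ht; case/edge_cases: (Hedge Ht) => [[j E]|[i E]]; rewrite E.
  rewrite inl_hedge => Hy; apply/orP; left; apply/covP; exists j.
  by rewrite eb_mkE -E Ht /= !(eq_sym _ y).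
rewrite inl_leafe => /eqP Ey; apply/orP; right.
case Hg: (mkG y) => [//|]; have := mkG_none i Hg; by rewrite Ey -E Ht.
Qed.

Lemma mk_valid : validc (mkE, mkG).
Proof.
apply/andP; split; first (apply/andP; split).
- apply/HmatchP => j j' Hne; rewrite !eb_mkE => Hj Hj'.
  have Hne' : hedge j != hedge j' by apply: contra Hne => /eqP /hedge_inj ->.
  move/disjP: (Hdisj Hj Hj' Hne') => D.
  apply/and4P; split; apply/negP => /eqP E.
  + by move: (D (inl (hu j))); rewrite !inl_hedge E !eqxx ?orbT ?orTb => /(_ isT).
  + by move: (D (inl (hu j))); rewrite !inl_hedge E !eqxx ?orbT ?orTb => /(_ isT).
  + by move: (D (inl (hv j))); rewrite !inl_hedge E !eqxx ?orbT ?orTb => /(_ isT).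
  + by move: (D (inl (hv j))); rewrite !inl_hedge E !eqxx ?orbT ?orTb => /(_ isT).
- apply/maxcP => j; rewrite !nth_zs; apply/negP => /and4P [c1 c2 z1 z2].
  have HnM : hedge j \notin M.
    apply: contraNN c1 => Hj; apply/covP; exists j; by rewrite eb_mkE Hj eqxx.
  apply: (not_max (hedge_edge j) HnM) => t Ht; apply/disjP => x.
  have Hy (y : 'I_6) : ~~ covn mkE y -> alpha y == 0 -> inl y \notin t.
    move=> cy zy; apply/negP => /(inM_cases Ht); rewrite (negbTE cy) /=.
    case Hg: (mkG y) => [i|] //= _; move: zy; by rewrite -(mkG_f Hg) (negbTE (alpha_f i)).
  by rewrite in_hedge => /orP [] /eqP ->; apply: Hy.
- apply/forallP => v /=; rewrite /opt.
  case: ifP => Hcv.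
    rewrite inE; apply/eqP; case Hg: (mkG v) => [i|] //.
    have Hf := mkG_f Hg; have Hl := mkG_some Hg.
    move: Hcv; rewrite -Hf (negbTE (alpha_f i)) orbF Hf => /covP [j /andP [Hj Hjv]].
    rewrite eb_mkE in Hj.
    have Hx : inl v \in hedge j by rewrite inl_hedge !(eq_sym v).
    have := same_vertex Hj Hl Hx; rewrite inl_leafe eqxx => /(_ isT) E.
    by move: (hedge_leafe j v i); rewrite E eqxx.
  move/norP: Hcv => [Hcv Ha].
  case Hg: (mkG v) => [i|].
    by apply/imsetP; exists i; rewrite // inE (mkG_f Hg).
  exfalso; move: Ha; rewrite /alpha -lt0n card_gt0 => /set0Pn [i0]; rewrite inE => /eqP Hi0.
  have := mkG_none i0 Hg; rewrite -{1}Hi0 => HnM.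
  apply: (not_max (leafe_edge i0) HnM) => t Ht; apply/disjP => x.
  rewrite in_leafe => /orP [] /eqP ->.
    apply/negP => /(inM_cases Ht); by rewrite Hi0 (negbTE Hcv) Hg.
  apply/negP => Hxt; case/edge_cases: (Hedge Ht) => [[j E]|[i E]].
    by move: Hxt; rewrite E inr_hedge.
  move: Hxt; rewrite E inr_leafe => /eqP Ei; move: HnM; by rewrite Ei -E Ht.
Qed.

Lemma mk_decode : decode (mkE, mkG) = M.
Proof.
apply/setP => s; apply/idP/idP.
  case/in_decode => [[j Hj ->]|[v [i [Hi ->]]]]; first by rewrite -eb_mkE.
  exact: mkG_some.
move=> Hs; case/edge_cases: (Hedge Hs) => [[j E]|[i E]]; rewrite E.
  by rewrite hedge_in_decode -[(mkE, mkG).1]/mkE eb_mkE -E.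
rewrite leafe_in_decode /=.
case Hg: (mkG (f i)) => [i'|]; last by move: (mkG_none i Hg); rewrite -E Hs.
have Hl := mkG_some Hg.
have Hx : inl (f i) \in s by rewrite E inl_leafe.
have := same_vertex Hs Hl Hx; rewrite inl_leafe eqxx => /(_ isT); rewrite E.
by case/leafe_inj => _ ->.
Qed.

End Surj.

Lemma card_ord_count n (P : pred nat) : #|[set j : 'I_n | P j]| = count P (iota 0 n).
Proof.
rewrite cardsE cardE /enum_mem size_filter -enumT -val_enum_ord count_map.
by apply: eq_count => x.
Qed.

Lemma card_decode (c : code) : #|decode c| = nbits c.1 + #|[set v | c.2 v != None]|.
Proof.
rewrite /decode; have -> : #|hedge @: ebs c.1 :|: [set leafe p.1 p.2 | p in lps c.2]| =
   #|hedge @: ebs c.1| + #|[set leafe p.1 p.2 | p in lps c.2]|.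
  apply/eqP; rewrite (leq_card_setU _ _).2; apply/disjP => x /imsetP [j _ ->].
  apply/negP => /imsetP [p _ E]; by move: (hedge_leafe j p.1 p.2); rewrite E eqxx.
rewrite card_imset; last exact: hedge_inj.
rewrite /ebs card_ord_count /nbits; congr addn.
rewrite card_in_imset; last first.
  by move=> [v i] [v' i'] _ _ /= /leafe_inj [-> ->].
have <- : fst @: lps c.2 = [set v | c.2 v != None].
  apply/setP => v; rewrite inE; apply/imsetP/idP => [[p]|].
    by rewrite inE => /eqP H ->; rewrite H.
  by case H: (c.2 v) => [i|] // _; exists (v, i); rewrite // inE H.
rewrite card_in_imset //.
move=> [v i] [v' i']; rewrite !inE /= => /eqP H /eqP H' E; move: H'; rewrite -E H.
by case=> ->.
Qed.

Lemma sum_max (F : {set {set V}} -> nat) :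
  \sum_(M | maximal_matching adj M) F M = \sum_(c | validc c) F (decode c).
Proof.
have E : [set M | maximal_matching adj M] = decode @: [set c | validc c].
  apply/setP => M; rewrite inE; apply/idP/imsetP => [HM|[c]].
    by exists (mkE M, mkG M); rewrite ?inE ?mk_valid ?mk_decode.
  by rewrite inE => Hc ->; exact: decode_max.
rewrite (eq_bigl (fun M => M \in [set M | maximal_matching adj M])); last first.
  by move=> M; rewrite inE.
rewrite E big_imset; last by move=> ? ? _ _; exact: decode_inj.
by apply: eq_bigl => c; rewrite inE.
Qed.

Lemma card_opt e (v : 'I_6) : #|opt e v| = fac csf e v.
Proof.
rewrite /opt /fac nth_cs; case: (covn e v) => /=; first by rewrite cards1.
case: (alpha v =P 0) => [->|Ha] /=; first by rewrite cards1.
rewrite card_imset; last by move=> ? ? [].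
by rewrite -/(alpha v); case: (alpha v) Ha.
Qed.

Lemma foldr_prod (T : finType) (g : T -> nat) : foldr muln 1 [seq g x | x : T] = \prod_(x : T) g x.
Proof.
rewrite [RHS](eq_bigl (fun x => x \in T)) // -big_enum /image_mem.
by elim: (enum_mem _) => [|x s IH] /=; rewrite ?big_nil ?big_cons ?IH.
Qed.

Lemma card_fam e : #|[set g : {ffun 'I_6 -> option 'I_k} | [forall v, g v \in opt e v]]| = mono csf e.
Proof.
rewrite cardsE.
have -> : #|[pred g : {ffun 'I_6 -> option 'I_k} | [forall v, g v \in opt e v]]| =
          #|family (fun v => mem (opt e v))|.
  by apply: eq_card => g.
rewrite card_family.
rewrite foldr_prod (eq_bigr _ (fun v _ => card_opt e v)).
by rewrite !big_ord_recr big_ord0 /= mul1n.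
Qed.

Lemma sum_codes (G : code -> nat) (w : B7 -> nat) :
  (forall c, validc c -> G c = w c.1) ->
  \sum_(c | validc c) G c = \sum_(e | Hvalid zsf e) mono csf e * w e.
Proof.
move=> H; rewrite big_mkcond sum_pair [RHS]big_mkcond; apply: eq_bigr => e _.
rewrite /validc /=; case He: (Hvalid zsf e) => /=; last by rewrite big1.
rewrite -big_mkcond (eq_bigr (fun _ => w e)); last first.
  by move=> g Hg; rewrite H // /validc He.
rewrite sum_nat_const -card_fam; congr muln.
by rewrite cardsE.
Qed.


Lemma total_eq : \sum_(M | maximal_matching adj M) #|M| = TOT asf.
Proof.
rewrite sum_max (sum_codes (w := wt zsf)) //.
move=> [e g] Hc; rewrite card_decode /wt; congr addn.
rewrite -card_ord_count; apply: eq_card => v; rewrite !inE nth_zs /=.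
case/andP: Hc => _ /forallP /(_ v) /=.
case Hg: (g v) => [i|] /=.
  by case/opt_some => <- ->; rewrite alpha_f.
by move/opt_none; case: (covn e v) => //= ->.
Qed.

Lemma count_eq : #|[set M | maximal_matching adj M]| = CNT asf.
Proof.
rewrite -sum1_card (eq_bigl (fun M => maximal_matching adj M)); last by move=> M; rewrite inE.
rewrite sum_max (sum_codes (w := fun _ => 1)) //.
by apply: eq_bigr => e _; rewrite muln1.
Qed.

Lemma avm_eq : avm (pend_adj f) = ((TOT asf)%:R / (CNT asf)%:R)%R.
Proof. by rewrite /avm total_eq count_eq. Qed.

Lemma sum_alpha : \sum_(v : 'I_6) alpha v = k.
Proof.
rewrite -[RHS]card_ord -sum1_card (partition_big f xpredT) //=.
apply: eq_bigr => v _; rewrite /alpha -sum1_card; apply: eq_bigl => i; by rewrite inE.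
Qed.

Lemma sumn_asf : sumn asf = k.
Proof.
have H := sum_alpha.
rewrite (eq_bigr (fun v : 'I_6 => nth 0 asf v)) in H; last by move=> v _; rewrite nth_asf.
rewrite !big_ord_recr big_ord0 /= in H.
rewrite -[in RHS]H /=; ring.
Qed.

End Graph.

Lemma alpha_const k (u : 'I_6) : alpha (fun _ : 'I_k => v3) u = if u == v3 then k else 0.
Proof.
rewrite /alpha; case: (eqVneq u v3) => [_|H] /=.
  have -> : [set i : 'I_k | true] = setT by apply/setP => i; rewrite !inE.
  by rewrite cardsT card_ord.
have -> : [set i : 'I_k | false] = set0 by apply/setP => i; rewrite !inE.
by rewrite cards0.
Qed.

Lemma asf_const k : asf (fun _ : 'I_k => v3) = [:: 0; 0; k; 0; 0; 0].
Proof. by rewrite /asf !alpha_const. Qed.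

Lemma TOT_le xs : TOT xs <= 13 * CNT xs.
Proof.
rewrite /TOT /CNT big_distrr /=; apply: leq_sum => e _.
rewrite [13 * _]mulnC; apply: leq_mul => //.
apply: (leq_trans (leq_add (count_size _ _) (count_size _ _))); by rewrite !size_iota.
Qed.

Lemma ratlt (a b c d : nat) : 0 < b -> 0 < d -> a * d < c * b ->
  ((a%:R / b%:R : rat) < c%:R / d%:R)%R.
Proof.
move=> Hb Hd H.
by rewrite ltr_pdivrMr ?ltr0n // mulrAC ltr_pdivlMr ?ltr0n // -!natrM ltr_nat.
Qed.
Lemma case_0001 b2 b5 :
  (9 * (0 + 0 + b2.+1 + 0 + 0 + b5.+1) + 15) * CNT [:: 0; 0; b2.+1; 0; 0; b5.+1] < TOT [:: 0; 0; b2.+1; 0; 0; b5.+1] * (3 * (0 + 0 + b2.+1 + 0 + 0 + b5.+1) + 7).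
Proof.
evalTC.
apply: (lt_by_eq (d := 26 + 28*b5 + 3*b5*b5 + 22*b2 + 25*b2*b5 + 3*b2*b5*b5 + 3*b2*b2 + 3*b2*b2*b5)). ring.
Qed.

Lemma case_0010 b2 b4 :
  (9 * (0 + 0 + b2.+1 + 0 + b4.+1 + 0) + 15) * CNT [:: 0; 0; b2.+1; 0; b4.+1; 0] < TOT [:: 0; 0; b2.+1; 0; b4.+1; 0] * (3 * (0 + 0 + b2.+1 + 0 + b4.+1 + 0) + 7).
Proof.
evalTC.
apply: (lt_by_eq (d := 26 + 28*b4 + 3*b4*b4 + 22*b2 + 25*b2*b4 + 3*b2*b4*b4 + 3*b2*b2 + 3*b2*b2*b4)). ring.
Qed.

Lemma case_0011 b2 b4 b5 :
  (9 * (0 + 0 + b2.+1 + 0 + b4.+1 + b5.+1) + 15) * CNT [:: 0; 0; b2.+1; 0; b4.+1; b5.+1] < TOT [:: 0; 0; b2.+1; 0; b4.+1; b5.+1] * (3 * (0 + 0 + b2.+1 + 0 + b4.+1 + b5.+1) + 7).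
Proof.
evalTC.
apply: (lt_by_eq (d := 115 + 96*b5 + 9*b5*b5 + 96*b4 + 74*b4*b5 + 6*b4*b5*b5 + 9*b4*b4 + 6*b4*b4*b5 + 78*b2 + 62*b2*b5 + 6*b2*b5*b5 + 62*b2*b4 + 40*b2*b4*b5 + 3*b2*b4*b5*b5 + 6*b2*b4*b4 + 3*b2*b4*b4*b5 + 9*b2*b2 + 6*b2*b2*b5 + 6*b2*b2*b4 + 3*b2*b2*b4*b5)). ring.
Qed.

Lemma case_0100 b1 b2 :
  (9 * (0 + b1.+1 + b2.+1 + 0 + 0 + 0) + 15) * CNT [:: 0; b1.+1; b2.+1; 0; 0; 0] < TOT [:: 0; b1.+1; b2.+1; 0; 0; 0] * (3 * (0 + b1.+1 + b2.+1 + 0 + 0 + 0) + 7).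
Proof.
evalTC.
apply: (lt_by_eq (d := 44 + 27*b2 + 33*b1 + 18*b1*b2)). ring.
Qed.

Lemma case_0101 b1 b2 b5 :
  (9 * (0 + b1.+1 + b2.+1 + 0 + 0 + b5.+1) + 15) * CNT [:: 0; b1.+1; b2.+1; 0; 0; b5.+1] < TOT [:: 0; b1.+1; b2.+1; 0; 0; b5.+1] * (3 * (0 + b1.+1 + b2.+1 + 0 + 0 + b5.+1) + 7).
Proof.
evalTC.
apply: (lt_by_eq (d := 111 + 87*b5 + 9*b5*b5 + 71*b2 + 59*b2*b5 + 6*b2*b5*b5 + 6*b2*b2 + 6*b2*b2*b5 + 83*b1 + 65*b1*b5 + 6*b1*b5*b5 + 46*b1*b2 + 37*b1*b2*b5 + 3*b1*b2*b5*b5 + 3*b1*b2*b2 + 3*b1*b2*b2*b5 + 6*b1*b1 + 6*b1*b1*b5 + 3*b1*b1*b2 + 3*b1*b1*b2*b5)). ring.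
Qed.

Lemma case_0110 b1 b2 b4 :
  (9 * (0 + b1.+1 + b2.+1 + 0 + b4.+1 + 0) + 15) * CNT [:: 0; b1.+1; b2.+1; 0; b4.+1; 0] < TOT [:: 0; b1.+1; b2.+1; 0; b4.+1; 0] * (3 * (0 + b1.+1 + b2.+1 + 0 + b4.+1 + 0) + 7).
Proof.
evalTC.
apply: (lt_by_eq (d := 111 + 87*b4 + 9*b4*b4 + 71*b2 + 59*b2*b4 + 6*b2*b4*b4 + 6*b2*b2 + 6*b2*b2*b4 + 83*b1 + 65*b1*b4 + 6*b1*b4*b4 + 46*b1*b2 + 37*b1*b2*b4 + 3*b1*b2*b4*b4 + 3*b1*b2*b2 + 3*b1*b2*b2*b4 + 6*b1*b1 + 6*b1*b1*b4 + 3*b1*b1*b2 + 3*b1*b1*b2*b4)). ring.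
Qed.

Lemma case_0111 b1 b2 b4 b5 :
  (9 * (0 + b1.+1 + b2.+1 + 0 + b4.+1 + b5.+1) + 15) * CNT [:: 0; b1.+1; b2.+1; 0; b4.+1; b5.+1] < TOT [:: 0; b1.+1; b2.+1; 0; b4.+1; b5.+1] * (3 * (0 + b1.+1 + b2.+1 + 0 + b4.+1 + b5.+1) + 7).
Proof.
evalTC.
apply: (lt_by_eq (d := 309 + 242*b5 + 24*b5*b5 + 242*b4 + 179*b4*b5 + 15*b4*b5*b5 + 24*b4*b4 + 15*b4*b4*b5 + 192*b2 + 142*b2*b5 + 12*b2*b5*b5 + 142*b2*b4 + 89*b2*b4*b5 + 6*b2*b4*b5*b5 + 12*b2*b4*b4 + 6*b2*b4*b4*b5 + 18*b2*b2 + 12*b2*b2*b5 + 12*b2*b2*b4 + 6*b2*b2*b4*b5 + 223*b1 + 170*b1*b5 + 15*b1*b5*b5 + 170*b1*b4 + 120*b1*b4*b5 + 9*b1*b4*b5*b5 + 15*b1*b4*b4 + 9*b1*b4*b4*b5 + 120*b1*b2 + 86*b1*b2*b5 + 6*b1*b2*b5*b5 + 86*b1*b2*b4 + 52*b1*b2*b4*b5 + 3*b1*b2*b4*b5*b5 + 6*b1*b2*b4*b4 + 3*b1*b2*b4*b4*b5 + 9*b1*b2*b2 + 6*b1*b2*b2*b5 + 6*b1*b2*b2*b4 + 3*b1*b2*b2*b4*b5 + 21*b1*b1 + 15*b1*b1*b5 + 15*b1*b1*b4 + 9*b1*b1*b4*b5 + 9*b1*b1*b2 + 6*b1*b1*b2*b5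 + 6*b1*b1*b2*b4 + 3*b1*b1*b2*b4*b5)). ring.
Qed.

Lemma case_1000 b0 b2 :
  (9 * (b0.+1 + 0 + b2.+1 + 0 + 0 + 0) + 15) * CNT [:: b0.+1; 0; b2.+1; 0; 0; 0] < TOT [:: b0.+1; 0; b2.+1; 0; 0; 0] * (3 * (b0.+1 + 0 + b2.+1 + 0 + 0 + 0) + 7).
Proof.
evalTC.
apply: (lt_by_eq (d := 44 + 27*b2 + 33*b0 + 18*b0*b2)). ring.
Qed.

Lemma case_1001 b0 b2 b5 :
  (9 * (b0.+1 + 0 + b2.+1 + 0 + 0 + b5.+1) + 15) * CNT [:: b0.+1; 0; b2.+1; 0; 0; b5.+1] < TOT [:: b0.+1; 0; b2.+1; 0; 0; b5.+1] * (3 * (b0.+1 + 0 + b2.+1 + 0 + 0 + b5.+1) + 7).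
Proof.
evalTC.
apply: (lt_by_eq (d := 111 + 87*b5 + 9*b5*b5 + 71*b2 + 59*b2*b5 + 6*b2*b5*b5 + 6*b2*b2 + 6*b2*b2*b5 + 83*b0 + 65*b0*b5 + 6*b0*b5*b5 + 46*b0*b2 + 37*b0*b2*b5 + 3*b0*b2*b5*b5 + 3*b0*b2*b2 + 3*b0*b2*b2*b5 + 6*b0*b0 + 6*b0*b0*b5 + 3*b0*b0*b2 + 3*b0*b0*b2*b5)). ring.
Qed.

Lemma case_1010 b0 b2 b4 :
  (9 * (b0.+1 + 0 + b2.+1 + 0 + b4.+1 + 0) + 15) * CNT [:: b0.+1; 0; b2.+1; 0; b4.+1; 0] < TOT [:: b0.+1; 0; b2.+1; 0; b4.+1; 0] * (3 * (b0.+1 + 0 + b2.+1 + 0 + b4.+1 + 0) + 7).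
Proof.
evalTC.
apply: (lt_by_eq (d := 111 + 87*b4 + 9*b4*b4 + 71*b2 + 59*b2*b4 + 6*b2*b4*b4 + 6*b2*b2 + 6*b2*b2*b4 + 83*b0 + 65*b0*b4 + 6*b0*b4*b4 + 46*b0*b2 + 37*b0*b2*b4 + 3*b0*b2*b4*b4 + 3*b0*b2*b2 + 3*b0*b2*b2*b4 + 6*b0*b0 + 6*b0*b0*b4 + 3*b0*b0*b2 + 3*b0*b0*b2*b4)). ring.
Qed.

Lemma case_1011 b0 b2 b4 b5 :
  (9 * (b0.+1 + 0 + b2.+1 + 0 + b4.+1 + b5.+1) + 15) * CNT [:: b0.+1; 0; b2.+1; 0; b4.+1; b5.+1] < TOT [:: b0.+1; 0; b2.+1; 0; b4.+1; b5.+1] * (3 * (b0.+1 + 0 + b2.+1 + 0 + b4.+1 + b5.+1) + 7).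
Proof.
evalTC.
apply: (lt_by_eq (d := 309 + 242*b5 + 24*b5*b5 + 242*b4 + 179*b4*b5 + 15*b4*b5*b5 + 24*b4*b4 + 15*b4*b4*b5 + 192*b2 + 142*b2*b5 + 12*b2*b5*b5 + 142*b2*b4 + 89*b2*b4*b5 + 6*b2*b4*b5*b5 + 12*b2*b4*b4 + 6*b2*b4*b4*b5 + 18*b2*b2 + 12*b2*b2*b5 + 12*b2*b2*b4 + 6*b2*b2*b4*b5 + 223*b0 + 170*b0*b5 + 15*b0*b5*b5 + 170*b0*b4 + 120*b0*b4*b5 + 9*b0*b4*b5*b5 + 15*b0*b4*b4 + 9*b0*b4*b4*b5 + 120*b0*b2 + 86*b0*b2*b5 + 6*b0*b2*b5*b5 + 86*b0*b2*b4 + 52*b0*b2*b4*b5 + 3*b0*b2*b4*b5*b5 + 6*b0*b2*b4*b4 + 3*b0*b2*b4*b4*b5 + 9*b0*b2*b2 + 6*b0*b2*b2*b5 + 6*b0*b2*b2*b4 + 3*b0*b2*b2*b4*b5 + 21*b0*b0 + 15*b0*b0*b5 + 15*b0*b0*b4 + 9*b0*b0*b4*b5 + 9*b0*b0*b2 + 6*b0*b0*b2*b5 + 6*b0*b0*b2*b4 + 3*b0*b0*b2*b4*b5)). ring.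
Qed.

Lemma case_1100 b0 b1 b2 :
  (9 * (b0.+1 + b1.+1 + b2.+1 + 0 + 0 + 0) + 15) * CNT [:: b0.+1; b1.+1; b2.+1; 0; 0; 0] < TOT [:: b0.+1; b1.+1; b2.+1; 0; 0; 0] * (3 * (b0.+1 + b1.+1 + b2.+1 + 0 + 0 + 0) + 7).
Proof.
evalTC.
apply: (lt_by_eq (d := 147 + 96*b2 + 9*b2*b2 + 118*b1 + 87*b1*b2 + 9*b1*b2*b2 + 12*b1*b1 + 9*b1*b1*b2 + 118*b0 + 87*b0*b2 + 9*b0*b2*b2 + 112*b0*b1 + 96*b0*b1*b2 + 9*b0*b1*b2*b2 + 12*b0*b1*b1 + 9*b0*b1*b1*b2 + 12*b0*b0 + 9*b0*b0*b2 + 12*b0*b0*b1 + 9*b0*b0*b1*b2)). ring.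
Qed.

Lemma case_1101 b0 b1 b2 b5 :
  (9 * (b0.+1 + b1.+1 + b2.+1 + 0 + 0 + b5.+1) + 15) * CNT [:: b0.+1; b1.+1; b2.+1; 0; 0; b5.+1] < TOT [:: b0.+1; b1.+1; b2.+1; 0; 0; b5.+1] * (3 * (b0.+1 + b1.+1 + b2.+1 + 0 + 0 + b5.+1) + 7).
Proof.
evalTC.
apply: (lt_by_eq (d := 266 + 177*b5 + 18*b5*b5 + 158*b2 + 102*b2*b5 + 9*b2*b5*b5 + 15*b2*b2 + 9*b2*b2*b5 + 208*b1 + 133*b1*b5 + 12*b1*b5*b5 + 130*b1*b2 + 77*b1*b2*b5 + 6*b1*b2*b5*b5 + 12*b1*b2*b2 + 6*b1*b2*b2*b5 + 21*b1*b1 + 12*b1*b1*b5 + 12*b1*b1*b2 + 6*b1*b1*b2*b5 + 208*b0 + 133*b0*b5 + 12*b0*b5*b5 + 130*b0*b2 + 77*b0*b2*b5 + 6*b0*b2*b5*b5 + 12*b0*b2*b2 + 6*b0*b2*b2*b5 + 186*b0*b1 + 111*b0*b1*b5 + 9*b0*b1*b5*b5 + 136*b0*b1*b2 + 77*b0*b1*b2*b5 + 6*b0*b1*b2*b5*b5 + 12*b0*b1*b2*b2 + 6*b0*b1*b2*b2*b5 + 18*b0*b1*b1 + 9*b0*b1*b1*b5 + 12*b0*b1*b1*b2 + 6*b0*b1*b1*b2*b5 + 21*b0*b0 + 12*b0*b0*b5 + 12*b0*b0*b2 + 6*b0*b0*b2*b5 + 18*b0*b0*b1 + 9*b0*b0*b1*b5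 + 12*b0*b0*b1*b2 + 6*b0*b0*b1*b2*b5)). ring.
Qed.

Lemma case_1110 b0 b1 b2 b4 :
  (9 * (b0.+1 + b1.+1 + b2.+1 + 0 + b4.+1 + 0) + 15) * CNT [:: b0.+1; b1.+1; b2.+1; 0; b4.+1; 0] < TOT [:: b0.+1; b1.+1; b2.+1; 0; b4.+1; 0] * (3 * (b0.+1 + b1.+1 + b2.+1 + 0 + b4.+1 + 0) + 7).
Proof.
evalTC.
apply: (lt_by_eq (d := 266 + 177*b4 + 18*b4*b4 + 158*b2 + 102*b2*b4 + 9*b2*b4*b4 + 15*b2*b2 + 9*b2*b2*b4 + 208*b1 + 133*b1*b4 + 12*b1*b4*b4 + 130*b1*b2 + 77*b1*b2*b4 + 6*b1*b2*b4*b4 + 12*b1*b2*b2 + 6*b1*b2*b2*b4 + 21*b1*b1 + 12*b1*b1*b4 + 12*b1*b1*b2 + 6*b1*b1*b2*b4 + 208*b0 + 133*b0*b4 + 12*b0*b4*b4 + 130*b0*b2 + 77*b0*b2*b4 + 6*b0*b2*b4*b4 + 12*b0*b2*b2 + 6*b0*b2*b2*b4 + 186*b0*b1 + 111*b0*b1*b4 + 9*b0*b1*b4*b4 + 136*b0*b1*b2 + 77*b0*b1*b2*b4 + 6*b0*b1*b2*b4*b4 + 12*b0*b1*b2*b2 + 6*b0*b1*b2*b2*b4 + 18*b0*b1*b1 + 9*b0*b1*b1*b4 + 12*b0*b1*b1*b2 + 6*b0*b1*b1*b2*b4 + 21*b0*b0 + 12*b0*b0*b4 + 12*b0*b0*b2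 + 6*b0*b0*b2*b4 + 18*b0*b0*b1 + 9*b0*b0*b1*b4 + 12*b0*b0*b1*b2 + 6*b0*b0*b1*b2*b4)). ring.
Qed.

Lemma case_1111 b0 b1 b2 b4 b5 :
  (9 * (b0.+1 + b1.+1 + b2.+1 + 0 + b4.+1 + b5.+1) + 15) * CNT [:: b0.+1; b1.+1; b2.+1; 0; b4.+1; b5.+1] < TOT [:: b0.+1; b1.+1; b2.+1; 0; b4.+1; b5.+1] * (3 * (b0.+1 + b1.+1 + b2.+1 + 0 + b4.+1 + b5.+1) + 7).
Proof.
evalTC.
apply: (lt_by_eq (d := 559 + 406*b5 + 39*b5*b5 + 406*b4 + 290*b4*b5 + 24*b4*b5*b5 + 39*b4*b4 + 24*b4*b4*b5 + 328*b2 + 225*b2*b5 + 18*b2*b5*b5 + 225*b2*b4 + 138*b2*b4*b5 + 9*b2*b4*b5*b5 + 18*b2*b4*b4 + 9*b2*b4*b4*b5 + 30*b2*b2 + 18*b2*b2*b5 + 18*b2*b2*b4 + 9*b2*b2*b4*b5 + 406*b1 + 284*b1*b5 + 24*b1*b5*b5 + 284*b1*b4 + 200*b1*b4*b5 + 15*b1*b4*b5*b5 + 24*b1*b4*b4 + 15*b1*b4*b4*b5 + 247*b1*b2 + 163*b1*b2*b5 + 12*b1*b2*b5*b5 + 163*b1*b2*b4 + 98*b1*b2*b4*b5 + 6*b1*b2*b4*b5*b5 + 12*b1*b2*b4*b4 + 6*b1*b2*b4*b4*b5 + 21*b1*b2*b2 + 12*b1*b2*b2*b5 + 12*b1*b2*b2*b4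 + 6*b1*b2*b2*b4*b5 + 39*b1*b1 + 24*b1*b1*b5 + 24*b1*b1*b4 + 15*b1*b1*b4*b5 + 21*b1*b1*b2 + 12*b1*b1*b2*b5 + 12*b1*b1*b2*b4 + 6*b1*b1*b2*b4*b5 + 406*b0 + 284*b0*b5 + 24*b0*b5*b5 + 284*b0*b4 + 200*b0*b4*b5 + 15*b0*b4*b5*b5 + 24*b0*b4*b4 + 15*b0*b4*b4*b5 + 247*b0*b2 + 163*b0*b2*b5 + 12*b0*b2*b5*b5 + 163*b0*b2*b4 + 98*b0*b2*b4*b5 + 6*b0*b2*b4*b5*b5 + 12*b0*b2*b4*b4 + 6*b0*b2*b4*b4*b5 + 21*b0*b2*b2 + 12*b0*b2*b2*b5 + 12*b0*b2*b2*b4 + 6*b0*b2*b2*b4*b5 + 334*b0*b1 + 228*b0*b1*b5 + 18*b0*b1*b5*b5 + 228*b0*b1*b4 + 166*b0*b1*b4*b5 + 12*b0*b1*b4*b5*b5 + 18*b0*b1*b4*b4 + 12*b0*b1*b4*b4*b5 + 250*b0*b1*b2 + 163*b0*b1*b2*b5 + 12*b0*b1*b2*b5*b5 + 163*b0*b1*b2*b4 + 98*b0*b1*b2*b4*b5 + 6*b0*b1*b2*b4*b5*b5 + 12*b0*b1*b2*b4*b4 + 6*b0*b1*b2*b4*b4*b5 + 21*b0*b1*b2*b2 + 12*b0*b1*b2*b2*b5 + 12*b0*b1*b2*b2*b4 + 6*b0*b1*b2*b2*b4*b5 + 30*b0*b1*b1 + 18*b0*b1*b1*b5 + 18*b0*b1*b1*b4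 + 12*b0*b1*b1*b4*b5 + 21*b0*b1*b1*b2 + 12*b0*b1*b1*b2*b5 + 12*b0*b1*b1*b2*b4 + 6*b0*b1*b1*b2*b4*b5 + 39*b0*b0 + 24*b0*b0*b5 + 24*b0*b0*b4 + 15*b0*b0*b4*b5 + 21*b0*b0*b2 + 12*b0*b0*b2*b5 + 12*b0*b0*b2*b4 + 6*b0*b0*b2*b4*b5 + 30*b0*b0*b1 + 18*b0*b0*b1*b5 + 18*b0*b0*b1*b4 + 12*b0*b0*b1*b4*b5 + 21*b0*b0*b1*b2 + 12*b0*b0*b1*b2*b5 + 12*b0*b0*b1*b2*b4 + 6*b0*b0*b1*b2*b4*b5)). ring.
Qed.

Lemma key x0 x1 b2 x4 x5 : 0 < x0 + x1 + x4 + x5 ->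
  (9 * (x0 + x1 + b2.+1 + 0 + x4 + x5) + 15) * CNT [:: x0; x1; b2.+1; 0; x4; x5] <
  TOT [:: x0; x1; b2.+1; 0; x4; x5] * (3 * (x0 + x1 + b2.+1 + 0 + x4 + x5) + 7).
Proof.
case: x0 => [|b0]; case: x1 => [|b1]; case: x4 => [|b4]; case: x5 => [|b5] // _.
- exact: case_0001.
- exact: case_0010.
- exact: case_0011.
- exact: case_0100.
- exact: case_0101.
- exact: case_0110.
- exact: case_0111.
- exact: case_1000.
- exact: case_1001.
- exact: case_1010.
- exact: case_1011.
- exact: case_1100.
- exact: case_1101.
- exact: case_1110.
- exact: case_1111.
Qed.

Lemma T_TOT' m : 0 < m -> TOT [:: 0; 0; m; 0; 0; 0] = 9 * m + 15.
Proof. by case: m => // m _; rewrite T_TOT. Qed.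
Lemma T_CNT' m : 0 < m -> CNT [:: 0; 0; m; 0; 0; 0] = 3 * m + 7.
Proof. by case: m => // m _; rewrite T_CNT. Qed.

Lemma final (k x0 x1 x2 x4 x5 : nat) : 0 < x2 -> 0 < x0 + x1 + x4 + x5 ->
  x0 + (x1 + (x2 + (0 + (x4 + (x5 + 0))))) = k ->
  (((TOT [:: 0; 0; k; 0; 0; 0])%:R / (CNT [:: 0; 0; k; 0; 0; 0])%:R : rat) <
   (TOT [:: x0; x1; x2; 0; x4; x5])%:R / (CNT [:: x0; x1; x2; 0; x4; x5])%:R)%R.
Proof.
case: x2 => // b2 _ Hp Hk.
have Ek : x0 + x1 + b2.+1 + 0 + x4 + x5 = k by rewrite -Hk; ring.
have Hkey := key b2 Hp; rewrite Ek in Hkey.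
have Hk0 : 0 < k by rewrite -Ek !addnS.
rewrite T_TOT' // T_CNT' //.
have Hc : 0 < CNT [:: x0; x1; b2.+1; 0; x4; x5].
  rewrite lt0n; apply/negP => /eqP H0; move: Hkey (TOT_le [:: x0; x1; b2.+1; 0; x4; x5]).
  by rewrite H0 !muln0 leqn0 => H1 /eqP H2; move: H1; rewrite H2 mul0n.
by apply: ratlt => //; rewrite addn_gt0 orbT.
Qed.

Unset Implicit Arguments.

Theorem lemma4p4 (n : nat) (hn : (7 <= n)%N) (f : 'I_(n - 6) -> 'I_6)
  (hv3 : exists i, f i = v3)
  (hw1 : forall i, f i != w1)
  (hother : exists i, f i \in [:: v1; v2; w2; w3]) :
  (avm (T1_33 n) < avm (pend_adj f))%R.
Proof.
rewrite /T1_33 !avm_eq asf_const.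
have hx3 : alpha f (@Ordinal 6 3 isT) = 0.
  rewrite /alpha; apply/eqP; rewrite cards_eq0; apply/eqP/setP => i; rewrite !inE.
  exact: negbTE (hw1 i).
have hx2 : 0 < alpha f (@Ordinal 6 2 isT).
  case: hv3 => i Hi; have -> : @Ordinal 6 2 isT = f i by rewrite Hi.
  by rewrite lt0n alpha_f.
have hs := sumn_asf f.
move: hs; rewrite /asf hx3 => hs.
apply: final hx2 _ hs.
case: hother => i; rewrite !inE => /or4P [] /eqP Hi; have := alpha_f f i; rewrite Hi -lt0n => H;
  by rewrite !addn_gt0 H ?orbT.
Qed.
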